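(* Consider the stock-market Hamiltonian $$H=H_0+\lambda H_I,$$ $$H_0=\omega_a\,\hat n+\omega_c\,\hat k+\omega_p\,\hat P+\sum_{k\in\Lambda}\big(\Omega_A(k)\,\hat N_k+\Omega_C(k)\,\hat K_k+\Omega_O(k)\,\hat O_k\big),$$ $$H_I=\big(z^\dagger Z(f)+z\,Z^\dagger(\overline f)\big)+\big(p^\dagger o(g)+p\,o^\dagger(\overline g)\big),$$ with all symbols as defined in the context. Then the operators $$\hat N:=\hat n+\sum_{k\in\Lambda}\hat N_k,\qquad \hat K:=\hat k+\sum_{k\in\Lambda}\hat K_k,\qquad \hat\Gamma:=\hat P+\sum_{k\in\Lambda}\hat O_k$$ are constants of motion, i.e. $[H,\hat N]=[H,\hat K]=[H,\hat\Gamma]=0$.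
   Context: Let $\Lambda\subset\mathbb N$ be a finite index set (labelling the traders other than a fixed trader $\tau$). Consider bosonic annihilation operators $a,c,p$ and $A_k,C_k,o_k$ ($k\in\Lambda$) on a Fock space with vacuum $\varphi_0$ (annihilated by all of them), satisfying $[a,a^\dagger]=[c,c^\dagger]=[p,p^\dagger]=\mathbb 1$, $[A_i,A_j^\dagger]=[C_i,C_j^\dagger]=[o_i,o_j^\dagger]=\delta_{ij}\mathbb 1$, with all other commutators between these operators and their adjoints equal to zero. The Fock space is the closure of the span of the orthonormal number vectors obtained by applying normalized powers of the creation operators to $\varphi_0$. Set $\hat n=a^\dagger a$, $\hat k=c^\dagger c$, $\hat P=p^\dagger p$, $\hat N_k=A_k^\dagger A_k$, $\hat K_k=C_k^\dagger C_k$, $\hat O_k=o_k^\dagger o_k$. For a bosonic mode $c$ (resp. $C_k$), the operators $c^{\hat P}$ and $(c^\dagger)^{\hat P}$ are defined on number vectors $\varphi$ in which the $c$-mode has occupation $k$ and the $p$-mode has occupation $m$ by: $c^{\hat P}\varphi=\varphi$ if $m=0$; $c^{\hat P}\varphi=0$ if $m>k$; $c^{\hat P}\varphi=\sqrt{k(k-1)\cdots(k-m+1)}\,\varphi'$ if $k\ge m>0$, where $\varphi'$ is the same number vector with $c$-occupation $k-m$; and $(c^\dagger)^{\hat P}\varphi=\varphi$ if $m=0$, $(c^\dagger)^{\hat P}\varphi=\sqrt{(k+1)(k+2)\cdots(k+m)}\,\varphi''$ if $m>0$, where $\varphi''$ has $c$-occupation $k+m$ (all other occupations unchanged). Define $z=a\,(c^\dagger)^{\hat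 P}$, $Z_k=A_k\,(C_k^\dagger)^{\hat P}$, and smeared fields $Z(f)=\sum_{k\in\Lambda}f(k)Z_k$, $Z^\dagger(\overline f)=\sum_{k\in\Lambda}\overline{f(k)}Z_k^\dagger=\sum_{k\in\Lambda}\overline{f(k)}A_k^\dagger C_k^{\hat P}$, $o(g)=\sum_{k\in\Lambda}g(k)o_k$, $o^\dagger(\overline g)=\sum_{k\in\Lambda}\overline{g(k)}o_k^\dagger$, where $f,g:\Lambda\to\mathbb C$. Here $\lambda,\omega_a,\omega_c,\omega_p>0$ are real constants and $\Omega_A,\Omega_C,\Omega_O:\Lambda\to[0,\infty)$ are real functions. Commutators are understood formally (e.g. on finite linear combinations of number vectors). *)

(* Defs.v *)
From HB Require Import structures.
From mathcomp Require Import all_boot all_order all_algebra.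
Set Implicit Arguments. Unset Strict Implicit. Unset Printing Implicit Defensive.
Import Order.TTheory GRing.Theory Num.Theory.
Local Open Scope ring_scope.

Section Fock.
Variables (C : numClosedFieldType) (L : finType).

Inductive mode := Ma | Mc | Mp | MA of L | MC of L | MO of L.

(* A number vector is labelled by the occupation numbers of all the modes:
   (n_a, n_c, n_p, (N_k)_k, (K_k)_k, (O_k)_k). *)
Definition conf : Type :=
  (nat * nat * nat * {ffun L -> nat} * {ffun L -> nat} * {ffun L -> nat})%type.

Definition occ (m : mode) (s : conf) : nat :=
  let '(x1, x2, x3, fA, fC, fO) := s in
  match m with
  | Ma => x1 | Mc => x2 | Mp => x3
  | MA k => fA k | MC k => fC k | MO k => fO k
  end.

Definition setocc (m : mode) (n : nat) (s : conf) : conf :=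
  let '(x1, x2, x3, fA, fC, fO) := s in
  match m with
  | Ma => (n, x2, x3, fA, fC, fO)
  | Mc => (x1, n, x3, fA, fC, fO)
  | Mp => (x1, x2, n, fA, fC, fO)
  | MA k => (x1, x2, x3, [ffun i => if i == k then n else fA i], fC, fO)
  | MC k => (x1, x2, x3, fA, [ffun i => if i == k then n else fC i], fO)
  | MO k => (x1, x2, x3, fA, fC, [ffun i => if i == k then n else fO i])
  end.

(* Finite linear combinations of number vectors (formal sums). *)
Definition vec := seq (C * conf).
Definition coef (v : vec) (s : conf) : C :=
  \sum_(e <- v) (if e.2 == s then e.1 else 0).

(* Operators are given by their action on number vectors, extended linearly. *)
Definition op := conf -> vec.
Definition opapply (A : op) (v : vec) : vec :=
  flatten [seq [seq (e.1 * d.1, d.2) | d <- A e.2] | e <- v].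
Definition opzero : op := fun _ => [::].
Definition opadd (A B : op) : op := fun s => A s ++ B s.
Definition opscale (c : C) (A : op) : op :=
  fun s => [seq (c * d.1, d.2) | d <- A s].
Definition opcomp (A B : op) : op := fun s => opapply A (B s).
Definition opsum (F : L -> op) : op := fun s => flatten [seq F k s | k <- enum L].
Definition comm (A B : op) : op :=
  opadd (opcomp A B) (opscale (-1) (opcomp B A)).

Definition op_is_zero (A : op) : Prop :=
  forall (v : vec) (s : conf), coef (opapply A v) s = 0.

Definition ann (m : mode) : op := fun s =>
  match occ m s with
  | 0 => [::]
  | n.+1 => [:: (sqrtC (n.+1)%:R, setocc m n s)]
  end.
Definition cre (m : mode) : op := fun s =>
  [:: (sqrtC ((occ m s).+1)%:R, setocc m (occ m s).+1 s)].
Definition num (m : mode) : op := opcomp (cre m) (ann m).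

(* m^{\hat Q} and (m^dagger)^{\hat Q}, the exponent being the occupation of q *)
Definition annP (m q : mode) : op := fun s =>
  let k := occ m s in let j := occ q s in
  if j == 0%N then [:: (1, s)]
  else if (k < j)%N then [::]
  else [:: (sqrtC (\prod_(i < j) (k - i))%N%:R, setocc m (k - j) s)].
Definition creP (m q : mode) : op := fun s =>
  let k := occ m s in let j := occ q s in
  if j == 0%N then [:: (1, s)]
  else [:: (sqrtC (\prod_(i < j) (k + i.+1))%N%:R, setocc m (k + j) s)].

(* z = a (c^dagger)^P,  z^dagger = a^dagger c^P *)
Definition z_op : op := opcomp (ann Ma) (creP Mc Mp).
Definition zdag_op : op := opcomp (cre Ma) (annP Mc Mp).
(* Z_k = A_k (C_k^dagger)^P,  Z_k^dagger = A_k^dagger C_k^P *)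
Definition Zk (k : L) : op := opcomp (ann (MA k)) (creP (MC k) Mp).
Definition Zkdag (k : L) : op := opcomp (cre (MA k)) (annP (MC k) Mp).
Definition Zf (f : L -> C) : op := opsum (fun k => opscale (f k) (Zk k)).
Definition Zdagf (f : L -> C) : op :=
  opsum (fun k => opscale (f k)^* (Zkdag k)).
Definition of_ (g : L -> C) : op := opsum (fun k => opscale (g k) (ann (MO k))).
Definition odagf (g : L -> C) : op :=
  opsum (fun k => opscale (g k)^* (cre (MO k))).

Definition H0 (wa wc wp : C) (OA OC OO : L -> C) : op :=
  opadd (opadd (opadd (opscale wa (num Ma)) (opscale wc (num Mc)))
               (opscale wp (num Mp)))
        (opsum (fun k => opadd (opadd (opscale (OA k) (num (MA k)))
                                      (opscale (OC k) (num (MC k))))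
                               (opscale (OO k) (num (MO k))))).

Definition HI (f g : L -> C) : op :=
  opadd (opadd (opcomp zdag_op (Zf f)) (opcomp z_op (Zdagf f)))
        (opadd (opcomp (cre Mp) (of_ g)) (opcomp (ann Mp) (odagf g))).

Definition Ham (lam wa wc wp : C) (OA OC OO f g : L -> C) : op :=
  opadd (H0 wa wc wp OA OC OO) (opscale lam (HI f g)).

Definition Ntot : op := opadd (num Ma) (opsum (fun k => num (MA k))).
Definition Ktot : op := opadd (num Mc) (opsum (fun k => num (MC k))).
Definition Gtot : op := opadd (num Mp) (opsum (fun k => num (MO k))).

End Fock.

(* Main.v *)
Require Import Defs.
From mathcomp Require Import all_boot all_order all_algebra zify.
Import Order.TTheory GRing.Theory Num.Theory.
Local Open Scope ring_scope.
Set Warnings "-notation-overridden,-ambiguous-paths".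

Set Implicit Arguments.
Section P.
Variables (C : numClosedFieldType) (L : finType).
Local Notation op := (op C L).
Local Notation vec := (vec C L).

Lemma coef_cat (u v : vec) t : coef (u ++ v) t = coef u t + coef v t.
Proof. by rewrite /coef big_cat. Qed.

Lemma coef_scale (c : C) (u : vec) t :
  coef [seq (c * d.1, d.2) | d <- u] t = c * coef u t.
Proof.
rewrite /coef big_map mulr_sumr; apply: eq_bigr => d _ /=.
by case: ifP; rewrite ?mulr0.
Qed.

Lemma coef_opapply (A : op) (v : vec) t :
  coef (opapply A v) t = \sum_(e <- v) e.1 * coef (A e.2) t.
Proof.
elim: v => [|e v IH]; first by rewrite /coef /opapply /= !big_nil.
by rewrite /opapply /= coef_cat coef_scale -/(opapply A v) IH big_cons.
Qed.

Definition diag (D : op) (q : conf L -> nat) :=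
  forall s, (forall d, d \in D s -> d.2 = s) /\ \sum_(d <- D s) d.1 = (q s)%:R.

Definition pres (A : op) (q : conf L -> nat) :=
  forall s d, d \in A s -> q d.2 = q s.

Lemma comm_diag A D q : diag D q -> pres A q -> op_is_zero (comm A D).
Proof.
move=> hD hA v t; rewrite coef_opapply big1 // => e _.
suff -> : coef (comm A D e.2) t = 0 by rewrite mulr0.
move: (e.2) => s {e v}.
rewrite /comm /opadd /opscale coef_cat coef_scale /opcomp !coef_opapply.
have [h1 h2] := hD s.
rewrite (eq_big_seq (fun e => e.1 * coef (A s) t)); last first.
  by move=> e he; rewrite (h1 e he).
rewrite -mulr_suml h2.
have hc : forall u, coef (D u) t = if u == t then (q u)%:R else 0.
  move=> u; have [k1 k2] := hD u; rewrite /coef.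
  rewrite (eq_big_seq (fun e => if u == t then e.1 else 0)); last first.
    by move=> e he; rewrite (k1 e he).
  by case: eqP => _; [rewrite k2 | rewrite big1].
rewrite (eq_big_seq (fun d => (if d.2 == t then d.1 else 0) * (q s)%:R)); last first.
  move=> d hd; rewrite hc (hA s d hd); by case: ifP; rewrite ?mulr0 ?mul0r.
by rewrite -mulr_suml -/(coef (A s) t) mulrC mulN1r subrr.
Qed.

Local Notation conf := (conf L).

Definition relop (A : op) (R : conf -> conf -> Prop) :=
  forall s d, d \in A s -> R s d.2.

Lemma rel_comp A B R1 R2 : relop A R1 -> relop B R2 ->
  relop (opcomp A B) (fun s t => exists u, R2 s u /\ R1 u t).
Proof.
move=> hA hB s d /flattenP [x /mapP [e he ->] /mapP [d' hd' ->]] /=.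
exists e.2; split; [exact: hB | exact: hA].
Qed.

Lemma rel_add A B R : relop A R -> relop B R -> relop (opadd A B) R.
Proof. by move=> hA hB s d; rewrite mem_cat => /orP [] h; [exact: (hA s d h)|exact: (hB s d h)]. Qed.

Lemma rel_scale c A R : relop A R -> relop (opscale c A) R.
Proof. by move=> hA s d /mapP [d' hd' ->]; exact: (hA s d' hd'). Qed.

Lemma rel_sum (F : L -> op) R : (forall k, relop (F k) R) -> relop (opsum F) R.
Proof. by move=> hF s d /flattenP [x /mapP [k _ ->] hd]; exact: (hF k s d hd). Qed.

Lemma rel_weak A (R R' : conf -> conf -> Prop) :
  relop A R -> (forall s t, R s t -> R' s t) -> relop A R'.
Proof. by move=> hA hR s d hd; apply: hR; exact: (hA s d hd). Qed.

Definition Qw (w : mode L -> nat) (s : conf) : nat :=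
  let '(x1, x2, x3, fA, fC, fO) := s in
  (w (Ma L) * x1 + w (Mc L) * x2 + w (Mp L) * x3 +
   \sum_(k : L) (w (MA k) * fA k + w (MC k) * fC k + w (MO k) * fO k))%N.

Lemma sumD1n (k : L) (F : L -> nat) :
  (\sum_(i : L) F i = F k + \sum_(i | i != k) F i)%N.
Proof. exact: bigD1. Qed.

Lemma Qw_set w m n s :
  (Qw w (setocc m n s) + w m * occ m s = Qw w s + w m * n)%N.
Proof.
case: s => [[[[[x1 x2] x3] fA] fC] fO]; case: m => [| | |k|k|k] /=; try lia.
all: rewrite (sumD1n k) [X in _ = (_ + X + _)%N](sumD1n k) ffunE eqxx.
all: under eq_bigr => i hi do rewrite ffunE (negbTE hi).
all: lia.
Qed.

Lemma occ_set (m : mode L) n s : occ m (setocc m n s) = n.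
Proof.
by case: s => [[[[[x1 x2] x3] fA] fC] fO]; case: m => [| | |k|k|k] //=; rewrite ffunE eqxx.
Qed.

Lemma setocc_set (m : mode L) a b s : setocc m a (setocc m b s) = setocc m a s.
Proof.
case: s => [[[[[x1 x2] x3] fA] fC] fO]; case: m => [| | |k|k|k] //=.
all: have E : forall f : {ffun L -> nat},
  [ffun i => if i == k then a else [ffun i0 => if i0 == k then b else f i0] i]
  = [ffun i => if i == k then a else f i]
  by move=> f; apply/ffunP => i; rewrite !ffunE; case: eqP.
all: by rewrite E.
Qed.

Lemma setocc_occ (m : mode L) s : setocc m (occ m s) s = s.
Proof.
case: s => [[[[[x1 x2] x3] fA] fC] fO]; case: m => [| | |k|k|k] //=.
all: have E : forall f : {ffun L -> nat},
  [ffun i => if i == k then f k else f i] = f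
  by move=> f; apply/ffunP => i; rewrite !ffunE; case: eqP => // ->.
all: by rewrite E.
Qed.

Definition wP (m : mode L) : nat := match m with Mp => 1 | _ => 0 end.
Lemma QwP s : Qw wP s = occ (Mp L) s.
Proof.
case: s => [[[[[x1 x2] x3] fA] fC] fO] /=; rewrite big1; first lia.
by move=> i _; rewrite !mul0n.
Qed.

Lemma rel_ann (m : mode L) : relop (@ann C L m) (fun s t => forall w, Qw w t + w m = Qw w s)%N.
Proof.
move=> s d; rewrite /ann; case E: (occ m s) => [|n] //.
rewrite inE => /eqP -> /= w; have := Qw_set w m n s; rewrite E; lia.
Qed.

Lemma rel_cre (m : mode L) : relop (@cre C L m) (fun s t => forall w, Qw w t = Qw w s + w m)%N.
Proof.
move=> s d; rewrite /cre inE => /eqP -> /= w; have := Qw_set w m (occ m s).+1 s; lia.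
Qed.

Lemma rel_annP (m q : mode L) :
  relop (@annP C L m q) (fun s t => forall w, Qw w t + w m * occ q s = Qw w s)%N.
Proof.
move=> s d; rewrite /annP; case: eqP => [E|_].
  by rewrite inE => /eqP -> /= w; rewrite E muln0 addn0.
case: ltnP => // hle; rewrite inE => /eqP -> /= w.
have := Qw_set w m (occ m s - occ q s) s; nia.
Qed.

Lemma rel_creP (m q : mode L) :
  relop (@creP C L m q) (fun s t => forall w, Qw w t = Qw w s + w m * occ q s)%N.
Proof.
move=> s d; rewrite /creP; case: eqP => [E|_].
  by rewrite inE => /eqP -> /= w; rewrite E muln0 addn0.
rewrite inE => /eqP -> /= w.
have := Qw_set w m (occ m s + occ q s) s; nia.
Qed.


Lemma diag_num (m : mode L) : diag (@num C L m) (occ m).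
Proof.
move=> s; rewrite /num /opcomp /opapply /ann; case E: (occ m s) => [|n] /=.
  by split => [d|]; rewrite ?in_nil ?big_nil.
rewrite /cre occ_set setocc_set -E setocc_occ; split.
  by move=> d; rewrite inE => /eqP ->.
by rewrite big_cons big_nil addr0 -expr2 sqrtCK.
Qed.

Lemma diag_add D1 D2 q1 q2 : diag D1 q1 -> diag D2 q2 ->
  diag (opadd D1 D2) (fun s => q1 s + q2 s)%N.
Proof.
move=> h1 h2 s; have [a1 b1] := h1 s; have [a2 b2] := h2 s; split.
  by move=> d; rewrite mem_cat => /orP [] h; [exact: a1|exact: a2].
by rewrite /opadd big_cat b1 b2 natrD.
Qed.

Lemma diag_sum (F : L -> op) q : (forall k, diag (F k) (q k)) ->
  diag (opsum F) (fun s => \sum_(k : L) q k s)%N.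
Proof.
move=> h s; split.
  move=> d /flattenP [x /mapP [k _ ->] hd]; have [a _] := h k s; exact: a.
rewrite /opsum big_flatten /= big_map natr_sum big_enum /=.
by apply: eq_bigr => k _; have [_ b] := h k s.
Qed.

Lemma diag_ext D q q' : diag D q -> (forall s, q s = q' s) -> diag D q'.
Proof. by move=> h e s; have [a b] := h s; split => //; rewrite -e. Qed.

Definition wN (m : mode L) : nat := match m with Ma | MA _ => 1 | _ => 0 end.
Definition wK (m : mode L) : nat := match m with Mc | MC _ => 1 | _ => 0 end.
Definition wG (m : mode L) : nat := match m with Mp | MO _ => 1 | _ => 0 end.

Lemma diag_Ntot : diag (@Ntot C L) (Qw wN).
Proof.
apply: diag_ext; first by apply: diag_add; [apply: diag_num | apply: diag_sum => k; apply: diag_num].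
case=> [[[[[x1 x2] x3] fA] fC] fO] /=.
under [X in _ = (_ + X)%N]eq_bigr => i _ do rewrite mul1n !mul0n !addn0.
lia.
Qed.

Lemma diag_Ktot : diag (@Ktot C L) (Qw wK).
Proof.
apply: diag_ext; first by apply: diag_add; [apply: diag_num | apply: diag_sum => k; apply: diag_num].
case=> [[[[[x1 x2] x3] fA] fC] fO] /=.
under [X in _ = (_ + X)%N]eq_bigr => i _ do rewrite mul1n !mul0n add0n addn0.
lia.
Qed.

Lemma diag_Gtot : diag (@Gtot C L) (Qw wG).
Proof.
apply: diag_ext; first by apply: diag_add; [apply: diag_num | apply: diag_sum => k; apply: diag_num].
case=> [[[[[x1 x2] x3] fA] fC] fO] /=.
under [X in _ = (_ + X)%N]eq_bigr => i _ do rewrite mul1n !mul0n !add0n.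
lia.
Qed.

Definition wsym (w : mode L -> nat) :=
  forall k, w (MA k) = w (Ma L) /\ w (MC k) = w (Mc L) /\ w (MO k) = w (Mp L).

Lemma pres_num w (m : mode L) : relop (@num C L m) (fun s t => Qw w t = Qw w s).
Proof.
rewrite /num; apply: rel_weak (rel_comp (rel_cre m) (rel_ann m)) _ => s t [u [h1 h2]].
have := h1 w; have := h2 w; lia.
Qed.

Lemma pres_Ham w lam wa wc wp (OA OC OO f g : L -> C) : wsym w ->
  pres (Ham lam wa wc wp OA OC OO f g) (Qw w).
Proof.
move=> hw; rewrite /pres -/(relop _ (fun s t => Qw w t = Qw w s)).
rewrite /Ham /H0 /HI.
repeat (apply: rel_add || apply: rel_scale || apply: pres_num || (apply: rel_sum => k)).
- have HZ : relop (Zf f) (fun s u => exists k, exists u0,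
      (forall w, Qw w u0 = Qw w s + w (MC k) * occ (Mp L) s)%N /\
      (forall w, Qw w u + w (MA k) = Qw w u0)%N).
    apply: rel_sum => k; apply: rel_scale.
    apply: rel_weak (rel_comp (rel_ann _) (rel_creP _ _)) _ => s u [u0 [h1 h2]].
    by exists k, u0.
  apply: rel_weak (rel_comp (rel_comp (rel_cre _) (rel_annP _ _)) HZ) _.
  move=> s t [u [[k [u0 [h1 h2]]] [u2 [h3 h4]]]].
  have [eA [eC eO]] := hw k.
  have p1 := h1 wP; have p2 := h2 wP; rewrite !QwP /= in p1 p2.
  have hp : occ (Mp L) u = occ (Mp L) s by lia.
  have := h1 w; have := h2 w; have := h3 w; have := h4 w.
  rewrite eA eC hp; nia.
- have HZ : relop (Zdagf f) (fun s u => exists k, exists u0,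
      (forall w, Qw w u0 + w (MC k) * occ (Mp L) s = Qw w s)%N /\
      (forall w, Qw w u = Qw w u0 + w (MA k))%N).
    apply: rel_sum => k; apply: rel_scale.
    apply: rel_weak (rel_comp (rel_cre _) (rel_annP _ _)) _ => s u [u0 [h1 h2]].
    by exists k, u0.
  apply: rel_weak (rel_comp (rel_comp (rel_ann _) (rel_creP _ _)) HZ) _.
  move=> s t [u [[k [u0 [h1 h2]]] [u2 [h3 h4]]]].
  have [eA [eC eO]] := hw k.
  have p1 := h1 wP; have p2 := h2 wP; rewrite !QwP /= in p1 p2.
  have hp : occ (Mp L) u = occ (Mp L) s by lia.
  have := h1 w; have := h2 w; have := h3 w; have := h4 w.
  rewrite eA eC hp; nia.
- have HZ : relop (of_ g) (fun s u => exists k,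
      (forall w, Qw w u + w (MO k) = Qw w s)%N).
    apply: rel_sum => k; apply: rel_scale.
    by apply: rel_weak (rel_ann _) _ => s u h; exists k.
  apply: rel_weak (rel_comp (rel_cre _) HZ) _.
  move=> s t [u [[k h1] h2]].
  have [eA [eC eO]] := hw k.
  have := h1 w; have := h2 w; rewrite eO; lia.
- have HZ : relop (odagf g) (fun s u => exists k,
      (forall w, Qw w u = Qw w s + w (MO k))%N).
    apply: rel_sum => k; apply: rel_scale.
    by apply: rel_weak (rel_cre _) _ => s u h; exists k.
  apply: rel_weak (rel_comp (rel_ann _) HZ) _.
  move=> s t [u [[k h1] h2]].
  have [eA [eC eO]] := hw k.
  have := h1 w; have := h2 w; rewrite eO; lia.
Qed.

Lemma symN : wsym wN. Proof. by []. Qed.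
Lemma symK : wsym wK. Proof. by []. Qed.
Lemma symG : wsym wG. Proof. by []. Qed.
End P.

Theorem proposition1 (C : numClosedFieldType) (L : finType)
  (lam wa wc wp : C) (OA OC OO f g : L -> C)
  (Hlam : 0 < lam) (Hwa : 0 < wa) (Hwc : 0 < wc) (Hwp : 0 < wp)
  (HOA : forall k, 0 <= OA k) (HOC : forall k, 0 <= OC k)
  (HOO : forall k, 0 <= OO k) :
  op_is_zero (comm (Ham lam wa wc wp OA OC OO f g) (@Ntot C L)) /\
  op_is_zero (comm (Ham lam wa wc wp OA OC OO f g) (@Ktot C L)) /\
  op_is_zero (comm (Ham lam wa wc wp OA OC OO f g) (@Gtot C L)).
Proof.
split; [|split].
- exact: (comm_diag (@diag_Ntot C L) (pres_Ham lam wa wc wp OA OC OO f g (@symN L))).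
- exact: (comm_diag (@diag_Ktot C L) (pres_Ham lam wa wc wp OA OC OO f g (@symK L))).
- exact: (comm_diag (@diag_Gtot C L) (pres_Ham lam wa wc wp OA OC OO f g (@symG L))).
Qed.
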